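(* Let $A$ be a $2\times n$ array with pairwise distinct entries and $k\ge 1$. Then the graph $G_{12}$ on $A$ is a $k$-page graph, i.e. there are no $k+1$ edges $(i_1,j_1),\dots,(i_{k+1},j_{k+1})\in E(G_{12})$ with $i_1<i_2<\dots<i_{k+1}<j_1<j_2<\dots<j_{k+1}$.
   Context: For a $2\times n$ array $A$ with distinct entries from a total order, the graph $G_{12}$ has vertex set $\{1,\dots,n\}$, and $(i,j)$ with $i<j$ is an edge iff (i) $A[1][i]<A[2][j]$; (ii) at most $k-1$ positions in $A[1..2][i..j]$ (rows 1 and 2, columns $i..j$) hold values larger than both $A[1][i]$ and $A[2][j]$; and (iii) there is no $j'>i$ such that $(i,j')$ satisfies (i) and (ii) and $A[1][i]<A[2][j']<A[2][j]$. *)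

(* Defs.v *)
From HB Require Import structures.
From mathcomp Require Import all_boot all_order all_algebra.
Set Implicit Arguments. Unset Strict Implicit. Unset Printing Implicit Defensive.
Import Order.TTheory.

(* A 2 x n array with entries in a totally ordered type T is a matrix
   'M[T]_(2, n); rows are indexed by 'I_2 (row 1 = ord0, row 2 = ord_max),
   columns by 'I_n (0-indexed: column c here is column c+1 of the paper). *)

Definition row1 : 'I_2 := ord0.
Definition row2 : 'I_2 := ord_max.

Definition distinct_entries d (T : orderType d) n (A : 'M[T]_(2, n)) : Prop :=
  injective (fun p : 'I_2 * 'I_n => A p.1 p.2).

Definition cond_i d (T : orderType d) n (A : 'M[T]_(2, n)) (i j : 'I_n) : bool :=
  (A row1 i < A row2 j)%O.

Definition cond_ii d (T : orderType d) n (A : 'M[T]_(2, n)) (k : nat) (i j : 'I_n) : bool :=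
  #|[set p : 'I_2 * 'I_n | [&& (i <= p.2)%N, (p.2 <= j)%N,
                             (A row1 i < A p.1 p.2)%O & (A row2 j < A p.1 p.2)%O]]|
   <= k - 1.

Definition cond_iii d (T : orderType d) n (A : 'M[T]_(2, n)) (k : nat) (i j : 'I_n) : bool :=
  ~~ [exists j' : 'I_n, [&& (i < j')%N, cond_i A i j', cond_ii A k i j',
                           (A row1 i < A row2 j')%O & (A row2 j' < A row2 j)%O]].

Definition G12_edge d (T : orderType d) n (A : 'M[T]_(2, n)) (k : nat) (i j : 'I_n) : bool :=
  [&& (i < j)%N, cond_i A i j, cond_ii A k i j & cond_iii A k i j].

(* Main.v *)
Require Import Defs.
From HB Require Import structures.
From mathcomp Require Import all_boot all_order all_algebra.
Import Order.TTheory.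

Lemma exmin d (T : orderType d) m (F : 'I_m.+1 -> T) :
  exists t, forall s, (F t <= F s)%O.
Proof.
exists (Order.arg_min ord0 xpredT F).
by case: arg_minP => // i _ H s; apply: H.
Qed.

Lemma mon_le m n (F : 'I_m -> 'I_n) :
  (forall s t : 'I_m, (s < t)%N -> (F s < F t)%N) ->
  forall s t : 'I_m, (s <= t)%N -> (F s <= F t)%N.
Proof.
move=> H s t; rewrite leq_eqVlt; case/orP=> [/eqP e|/H /ltnW //].
by have -> : s = t by apply/val_inj.
Qed.

Lemma mon_inj m n (F : 'I_m -> 'I_n) :
  (forall s t : 'I_m, (s < t)%N -> (F s < F t)%N) -> injective F.
Proof.
move=> H s t e; apply/val_inj/eqP; rewrite eqn_leq.
apply/andP; split.
  by case: (ltnP t s) => [/H|//]; rewrite e ltnn.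
by case: (ltnP s t) => [/H|//]; rewrite e ltnn.
Qed.

Arguments mon_inj {m n F}.
Arguments mon_le {m n F}.
Local Notation r1 := Defs.row1.
Local Notation r2 := Defs.row2.

Theorem lemma8 (d : Order.disp_t) (T : orderType d) (n k : nat) (A : 'M[T]_(2, n)) :
  distinct_entries A -> (1 <= k)%N ->
  ~ (exists I J : 'I_k.+1 -> 'I_n,
       [/\ (forall t, G12_edge A k (I t) (J t)),
           (forall s t : 'I_k.+1, (s < t)%N -> (I s < I t)%N),
           (forall s t : 'I_k.+1, (s < t)%N -> (J s < J t)%N) &
           (I ord_max < J ord0)%N]).
Proof.
move=> inj k1 [I [J [E Imon Jmon Hmid]]].
have IJ s t : (I s < J t)%N.
  have h1 : (I s <= I ord_max)%N by apply: mon_le Imon _ _ _; exact: leq_ord.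
  have h2 : (J ord0 <= J t)%N by apply: mon_le Jmon _ _ _.
  by apply: (leq_ltn_trans h1); apply: (leq_trans Hmid h2).
have r12 : r1 != r2 by [].
have [t Ht] := @exmin _ _ k (fun s => A r2 (J s)).
have /and4P [ij ci cii ciii] := E t.
rewrite /cond_i in ci.
have bst s : s != t -> (A r2 (J t) < A r2 (J s))%O.
  move=> st; rewrite lt_neqAle Ht andbT; apply/negP => /eqP e.
  have [] := inj (r2, J t) (r2, J s) e => /(mon_inj Jmon) ets.
  by move: st; rewrite ets eqxx.
case: (boolP [exists s : 'I_k.+1, (t < s)%N && (A r1 (I s) < A r2 (J t))%O]).
  case/existsP => s /andP [ts as_].
  have /and4P [_ _ _ ciiis] := E s.
  move/negP: ciiis; apply; apply/existsP; exists (J t).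
  rewrite IJ /cond_i as_ /=.
  have -> /= : (A r2 (J t) < A r2 (J s))%O.
    by apply: bst; rewrite neq_ltn ts orbT.
  rewrite andbT /cond_ii; apply: leq_trans cii; apply: subset_leq_card.
  apply/subsetP => p; rewrite !inE => /and4P [h1 h2 h3 h4]; apply/and4P; split => //.
    by apply: leq_trans h1; apply: mon_le Imon _ _ (ltnW ts).
  exact: lt_trans ci h4.
move=> H; exfalso.
pose f (s : 'I_k.+1) := if (s < t)%N then (r2, J s) else (r1, I s).
have cardf : #|f @: [set s | s != t]| = k.
  rewrite card_in_imset.
    have -> : [set s | s != t] = [set~ t] by apply/setP => s; rewrite !inE.
    by rewrite cardsC1 card_ord.
  move=> x y _ _ e; have e1 := congr1 fst e; have e2 := congr1 snd e; move: e1 e2; rewrite /f; case: ifP => hx; case: ifP => hy /= e1 e2.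
  - exact: mon_inj Jmon _ _ e2.
  - by move: r12; rewrite e1 eqxx.
  - by move: r12; rewrite e1 eqxx.
  - exact: mon_inj Imon _ _ e2.
have : (k <= k - 1)%N.
  rewrite -{1}cardf; apply: leq_trans cii; apply: subset_leq_card.
  apply/subsetP => p /imsetP [s]; rewrite inE => st ->; rewrite inE /f.
  case: ifP => hs /=.
    have hb := bst s st.
    by rewrite (ltnW (IJ _ _)) (mon_le Jmon _ _ (ltnW hs)) hb (lt_trans ci hb).
  have ts : (t < s)%N by rewrite ltn_neqAle eq_sym st leqNgt hs.
  have ha : (A r2 (J t) < A r1 (I s))%O.
    rewrite lt_neqAle; apply/andP; split.
      apply/negP => /eqP e; have e1 := congr1 fst (inj (r2, J t) (r1, I s) e); simpl in e1.
      by move: r12; rewrite e1 eqxx.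
    rewrite leNgt; apply/negP => hl; move/negP: H; apply; apply/existsP; exists s.
    by rewrite ts hl.
  by rewrite (mon_le Imon _ _ (ltnW ts)) (ltnW (IJ _ _)) ha (lt_trans ci ha).
by case: k k1 {cardf cii ciii E IJ H Imon Jmon I J Hmid Ht bst f t ij ci} => // k' _; rewrite subn1 /= ltnn.
Qed.
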